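(* Let $\mathbb{F}\in\{\mathbb{R},\mathbb{C},\mathbb{H}\}$, $G=\mathrm{SL}(3,\mathbb{F})$, $g\in G$ and $t\in V$. If $g\in Ka_tH$, then $$\Phi(g)=\Big(\sum_{i=1}^3e^{4t_i}\Big)\Big(\sum_{i=1}^3e^{-4t_i}\Big)=3+2\cosh(4(t_1-t_2))+2\cosh(4(t_1-t_3))+2\cosh(4(t_2-t_3)).$$ In particular $\Phi$ is left $K$-invariant, right $H$-invariant, $\Phi\circ\sigma=\Phi$, and the restriction of $\Phi$ to $A=\{a_t:t\in V\}$ is invariant under the Weyl group (permutations of $t_1,t_2,t_3$).
   Context: $\theta(g)=(g^{-1})^\dagger$, $J=\mathrm{diag}(1,-1,-1)$, $\sigma(g)=J\theta(g)J$, $K=G^\theta$, $H$ the identity component of $G^\sigma$. $\Phi(g)=\|g\sigma(g)^{-1}\|_{HS}^2\,\|\sigma(g)g^{-1}\|_{HS}^2$ where $\|X\|_{HS}^2=\sum_{i,j}|X_{ij}|^2$. $V=\{t\in\mathbb{R}^3:t_1+t_2+t_3=0\}$ and $a_t=\mathrm{diag}(e^{t_1},e^{t_2},e^{t_3})$. *)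

(* Defs.v *)
From HB Require Import structures.
From mathcomp Require Import all_boot all_order all_algebra.
From mathcomp Require Import complex.
From mathcomp Require Import reals sequences exp.
From mathcomp Require Import ring.
From Stdlib Require Import ClassicalEpsilon.

Set Implicit Arguments.
Unset Strict Implicit.
Unset Printing Implicit Defensive.

Import Order.TTheory GRing.Theory Num.Theory.
Local Open Scope ring_scope.

(* Quaternions over a real field R : Quat a b c d = a + b i + c j + d k *)
Record quat (R : Type) := Quat { qa : R; qb : R; qc : R; qd : R }.

Section Quaternions.
Variable R : realType.

Definition quat_to (x : quat R) := (qa x, qb x, qc x, qd x).
Definition quat_of (x : R * R * R * R) := let: (a, b, c, d) := x in Quat a b c d.
Lemma quat_toK : cancel quat_to quat_of. Proof. by case. Qed.

HB.instance Definition _ := Choice.copy (quat R) (can_type quat_toK).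

Definition q0 : quat R := Quat 0 0 0 0.
Definition q1 : quat R := Quat 1 0 0 0.
Definition qopp (x : quat R) := Quat (- qa x) (- qb x) (- qc x) (- qd x).
Definition qadd (x y : quat R) :=
  Quat (qa x + qa y) (qb x + qb y) (qc x + qc y) (qd x + qd y).
(* Hamilton product: i^2 = j^2 = k^2 = ijk = -1 *)
Definition qmul (x y : quat R) :=
  Quat (qa x * qa y - qb x * qb y - qc x * qc y - qd x * qd y)
       (qa x * qb y + qb x * qa y + qc x * qd y - qd x * qc y)
       (qa x * qc y - qb x * qd y + qc x * qa y + qd x * qb y)
       (qa x * qd y + qb x * qc y - qc x * qb y + qd x * qa y).

Lemma qaddA : associative qadd.
Proof. by move=> [? ? ? ?] [? ? ? ?] [? ? ? ?]; rewrite /qadd /=; congr Quat; ring. Qed.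
Lemma qaddC : commutative qadd.
Proof. by move=> [? ? ? ?] [? ? ? ?]; rewrite /qadd /=; congr Quat; ring. Qed.
Lemma qadd0 : left_id q0 qadd.
Proof. by move=> [? ? ? ?]; rewrite /qadd /=; congr Quat; ring. Qed.
Lemma qaddN : left_inverse q0 qopp qadd.
Proof. by move=> [? ? ? ?]; rewrite /qadd /=; congr Quat; ring. Qed.
Lemma qmulA : associative qmul.
Proof. by move=> [? ? ? ?] [? ? ? ?] [? ? ? ?]; rewrite /qmul /=; congr Quat; ring. Qed.
Lemma qmul1 : left_id q1 qmul.
Proof. by move=> [? ? ? ?]; rewrite /qmul /=; congr Quat; ring. Qed.
Lemma qmulr1 : right_id q1 qmul.
Proof. by move=> [? ? ? ?]; rewrite /qmul /=; congr Quat; ring. Qed.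
Lemma qmulDl : left_distributive qmul qadd.
Proof. by move=> [? ? ? ?] [? ? ? ?] [? ? ? ?]; rewrite /qmul /qadd /=; congr Quat; ring. Qed.
Lemma qmulDr : right_distributive qmul qadd.
Proof. by move=> [? ? ? ?] [? ? ? ?] [? ? ? ?]; rewrite /qmul /qadd /=; congr Quat; ring. Qed.
Lemma q1_neq0 : q1 != q0.
Proof. by apply/eqP => -[] /eqP; rewrite oner_eq0. Qed.

HB.instance Definition _ := GRing.isNzRing.Build (quat R)
  qaddA qaddC qadd0 qaddN qmulA qmul1 qmulr1 qmulDl qmulDr q1_neq0.

End Quaternions.

Inductive fld := FR | FC | FH.

Definition scal (R : realType) (F : fld) : nzRingType :=
  match F with
  | FR => R
  | FC => (R[i])%C
  | FH => quat R
  end.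

Definition sconj (R : realType) (F : fld) : scal R F -> scal R F :=
  match F as F0 return scal R F0 -> scal R F0 with
  | FR => fun x => x
  | FC => fun z => conjc z
  | FH => fun q => Quat (qa q) (- qb q) (- qc q) (- qd q)
  end.

Definition snorm2 (R : realType) (F : fld) : scal R F -> R :=
  match F as F0 return scal R F0 -> R with
  | FR => fun x => x ^+ 2
  | FC => fun z => complex.Re z ^+ 2 + complex.Im z ^+ 2
  | FH => fun q => qa q ^+ 2 + qb q ^+ 2 + qc q ^+ 2 + qd q ^+ 2
  end.

Definition sreal (R : realType) (F : fld) : R -> scal R F :=
  match F as F0 return R -> scal R F0 with
  | FR => fun x => x
  | FC => fun x => (x%:C)%C
  | FH => fun x => Quat x 0 0 0
  end.

Section Matrices.
Variables (R : realType) (F : fld).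
Local Notation S := (scal R F).
Local Notation M := 'M[S]_3.

(* Complex 2x2 representation of a quaternion a+bi+cj+dk = z + w j,
   z = a + b i, w = c + d i  |->  [[z, w], [-conj w, conj z]] *)
Definition quat_cmx (q : quat R) : 'M[R[i]]_2 :=
  \matrix_(i < 2, j < 2)
    (if i == 0 then (if j == 0 then Complex (qa q) (qb q) else Complex (qc q) (qd q))
     else (if j == 0 then - conjc (Complex (qc q) (qd q))
           else conjc (Complex (qa q) (qb q))))%C.

Definition qmx_cmx (g : 'M[quat R]_3) : 'M[R[i]]_6 :=
  \matrix_(i < 6, j < 6)
    quat_cmx (g (inord (i %/ 2)) (inord (j %/ 2))) (inord (i %% 2)) (inord (j %% 2)).

(* "determinant equals 1": the usual determinant for R and C; for H the
   Study determinant (determinant of the complex 6x6 image), which is 1 iff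
   the Dieudonne determinant is 1. *)
Definition det_one : M -> Prop :=
  match F as F0 return 'M[scal R F0]_3 -> Prop with
  | FR => fun g => \det g = 1
  | FC => fun g => \det g = 1
  | FH => fun g => \det (qmx_cmx g) = 1
  end.

Definition invertible (g : M) : Prop := exists h : M, g * h = 1 /\ h * g = 1.

(* the inverse matrix (g itself when g is not invertible) *)
Definition minv (g : M) : M :=
  match excluded_middle_informative (invertible g) with
  | left P => proj1_sig (constructive_indefinite_description _ P)
  | right _ => g
  end.

Definition SL3 : M -> Prop := fun g => invertible g /\ det_one g.

Definition adjm (g : M) : M := \matrix_(i, j) sconj (g j i).

Definition theta (g : M) : M := adjm (minv g).

Definition Jm : M := \matrix_(i, j)
  (if i == j then (if i == 0 then 1 else -1) else 0).

Definition sigma (g : M) : M := Jm * theta g * Jm.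

Definition Kgrp : M -> Prop := fun g => SL3 g /\ theta g = g.

Definition Gsigma : M -> Prop := fun g => SL3 g /\ sigma g = g.

Definition hs2 (X : M) : R := \sum_i \sum_j snorm2 (X i j).

Definition path_continuous (gam : R -> M) : Prop :=
  forall s0, 0 <= s0 <= 1 -> forall eps, 0 < eps ->
    exists2 del, 0 < del & forall s, 0 <= s <= 1 -> `|s - s0| < del ->
      hs2 (gam s - gam s0) < eps.

(* H = identity component of G^sigma (= its path component of 1, G^sigma
   being a closed linear Lie group) *)
Definition Hgrp : M -> Prop := fun h =>
  exists gam : R -> M, path_continuous gam /\
    (forall s, 0 <= s <= 1 -> Gsigma (gam s)) /\ gam 0 = 1 /\ gam 1 = h.

Definition Phi (g : M) : R := hs2 (g * minv (sigma g)) * hs2 (sigma g * minv g).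

Definition a_t (t : 'I_3 -> R) : M :=
  \matrix_(i, j) (if i == j then sreal F (expR (t i)) else 0).

End Matrices.

Definition coshR (R : realType) (x : R) : R := (expR x + expR (- x)) / 2.

Definition i1 : 'I_3 := ord0.
Definition i2 : 'I_3 := inord 1.
Definition i3 : 'I_3 := inord 2.

(* Main.v *)
Require Import Defs.
From HB Require Import structures.
From mathcomp Require Import all_boot all_order all_algebra.
From mathcomp Require Import fingroup perm reals sequences exp.
From mathcomp Require Import complex ring.
From Stdlib Require Import ClassicalEpsilon.
Import Order.TTheory GRing.Theory Num.Theory.
Local Open Scope ring_scope.
Set Implicit Arguments. Unset Strict Implicit. Unset Printing Implicit Defensive.
Section Base.
Variable R : realType.

Definition sre (F : fld) : scal R F -> R :=
  match F as F0 return scal R F0 -> R with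
  | FR => fun x => x
  | FC => fun z => complex.Re z
  | FH => fun q => qa q
  end.
Arguments sre {F}.

Lemma sconjD F (x y : scal R F) : sconj (x + y) = sconj x + sconj y.
Proof.
case: F x y => /=.
- by [].
- by move=> [a b] [c d]; rewrite /= ; congr Complex; simpl; ring.
- by move=> [a b c d] [e f g h] /=; congr Quat; simpl; ring.
Qed.
Lemma sconjM F (x y : scal R F) : sconj (x * y) = sconj y * sconj x.
Proof.
case: F x y => /=.
- by move=> x y; rewrite mulrC.
- by move=> [a b] [c d]; rewrite /= ; congr Complex; simpl; ring.
- by move=> [a b c d] [e f g h] /=; congr Quat; simpl; ring.
Qed.
Lemma sconjK F (x : scal R F) : sconj (sconj x) = x.
Proof.
case: F x => /=.
- by [].
- by move=> [a b]; rewrite /= opprK.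
- by move=> [a b c d] /=; rewrite !opprK.
Qed.
Lemma sconj0 F : sconj (0 : scal R F) = 0.
Proof. case: F => /=; [by []| by rewrite /= oppr0 | by rewrite /= !oppr0]. Qed.
Lemma sconj1 F : sconj (1 : scal R F) = 1.
Proof. case: F => /=; [by []| by rewrite /= oppr0 | by rewrite /= !oppr0]. Qed.
Lemma sconjN F (x : scal R F) : sconj (- x) = - sconj x.
Proof. by apply/eqP; rewrite -subr_eq0 opprK -sconjD addNr sconj0. Qed.
Lemma sreD F (x y : scal R F) : sre (x + y) = sre x + sre y.
Proof. case: F x y => /=; [by []| by move=> [a b] [c d] | by move=> [a b c d] [e f g h]]. Qed.
Lemma sre0 F : sre (0 : scal R F) = 0.
Proof. by case: F. Qed.
Lemma snorm2E F (x : scal R F) : snorm2 x = sre (x * sconj x).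
Proof.
case: F x => /=.
- by move=> x; rewrite expr2.
- by move=> [a b] /=; ring.
- by move=> [a b c d] /=; ring.
Qed.
Lemma snorm2E' F (x : scal R F) : snorm2 x = sre (sconj x * x).
Proof.
case: F x => /=.
- by move=> x; rewrite expr2.
- by move=> [a b] /=; ring.
- by move=> [a b c d] /=; ring.
Qed.
Lemma srealM F (x y : R) : sreal F (x * y) = sreal F x * sreal F y.
Proof.
case: F => /=.
- by [].
- by rewrite /= ; congr Complex; simpl; ring.
- by congr Quat; simpl; ring.
Qed.
Lemma sreal0 F : sreal F (0 : R) = 0. Proof. by case: F. Qed.
Lemma sreal1 F : sreal F (1 : R) = 1. Proof. by case: F. Qed.
Lemma srealC F (x : R) (y : scal R F) : sreal F x * y = y * sreal F x.
Proof.
case: F y => /=.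
- by move=> y; rewrite mulrC.
- by move=> y; rewrite mulrC.
- by move=> [a b c d]; congr Quat; simpl; ring.
Qed.
Lemma sconj_real F (x : R) : sconj (sreal F x) = sreal F x.
Proof. case: F => /=; [by [] | by rewrite oppr0 | by rewrite !oppr0]. Qed.
Lemma snorm2_real F (x : R) : snorm2 (sreal F x) = x ^+ 2.
Proof. case: F => /=; [by [] | by rewrite expr0n addr0 | by rewrite !expr0n !addr0]. Qed.

Variable F : fld.
Local Notation S := (scal R F).
Local Notation M := 'M[S]_3.
Local Notation J := (Jm R F).

Lemma sconj_sum (I : Type) (r : seq I) (P : pred I) (f : I -> S) :
  sconj (\sum_(i <- r | P i) f i) = \sum_(i <- r | P i) sconj (f i).
Proof. exact: (big_morph _ (@sconjD F) (sconj0 F)). Qed.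
Lemma sre_sum (I : Type) (r : seq I) (P : pred I) (f : I -> S) :
  sre (\sum_(i <- r | P i) f i) = \sum_(i <- r | P i) sre (f i).
Proof. exact: (big_morph _ (@sreD F) (sre0 F)). Qed.

Lemma mulE (A B : M) i j : (A * B) i j = \sum_k A i k * B k j.
Proof. by rewrite -mulmxE mxE. Qed.

Lemma adjmE (A : M) i j : adjm A i j = sconj (A j i).
Proof. by rewrite mxE. Qed.

Lemma adjmM (A B : M) : adjm (A * B) = adjm B * adjm A.
Proof.
apply/matrixP => i j; rewrite adjmE !mulE sconj_sum; apply: eq_bigr => k _.
by rewrite sconjM !adjmE.
Qed.
Lemma adjmK (A : M) : adjm (adjm A) = A.
Proof. by apply/matrixP => i j; rewrite !adjmE sconjK. Qed.
Lemma adjm1 : adjm (1 : M) = 1.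
Proof.
apply/matrixP => i j; rewrite adjmE !mxE eq_sym.
by case: (i == j); [rewrite mulr1n sconj1 | rewrite mulr0n sconj0].
Qed.

Definition dmx (d : 'I_3 -> S) : M := \matrix_(i, j) (if i == j then d i else 0).

Lemma dmxM d e : dmx d * dmx e = dmx (fun i => d i * e i).
Proof.
apply/matrixP => i j; rewrite mulE (bigD1 i) //= big1 ?addr0.
  rewrite !mxE eqxx; case: eqP => [->|]; by rewrite ?mulr0.
by move=> k /negPf nki; rewrite !mxE eq_sym nki mul0r.
Qed.
Lemma eq_dmx d e : (forall i, d i = e i) -> dmx d = dmx e.
Proof. by move=> de; apply/matrixP => i j; rewrite !mxE de. Qed.
Lemma dmx1 : dmx (fun=> 1) = 1.
Proof. by apply/matrixP => i j; rewrite !mxE; case: (i == j). Qed.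
Lemma adjm_dmx d : adjm (dmx d) = dmx (fun i => sconj (d i)).
Proof.
apply/matrixP => i j; rewrite adjmE !mxE eq_sym.
by case: eqP => [->|]; rewrite ?sconj0.
Qed.
Lemma JE : J = dmx (fun i => if i == 0 then 1 else -1).
Proof. by []. Qed.
Lemma JJ : J * J = 1.
Proof.
rewrite JE dmxM -dmx1; apply: eq_dmx => i.
by case: (i == 0); rewrite ?mulr1 ?mulrNN ?mulr1.
Qed.
Lemma adjmJ : adjm J = J.
Proof.
rewrite JE adjm_dmx; apply: eq_dmx => i.
by case: (i == 0); rewrite ?sconjN sconj1.
Qed.

Lemma minvP (g : M) : invertible g -> g * minv g = 1 /\ minv g * g = 1.
Proof.
move=> ig; rewrite /minv; case: excluded_middle_informative => // P.
by case: (constructive_indefinite_description _ P).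
Qed.
Lemma minv_uniq (g h : M) : g * h = 1 -> h * g = 1 -> minv g = h.
Proof.
move=> gh hg; have ig : invertible g by exists h.
have [gm mg] := minvP ig.
by rewrite -[minv g]mulr1 -gh mulrA mg mul1r.
Qed.
Lemma invM (A B : M) : invertible A -> invertible B -> invertible (A * B).
Proof.
move=> /minvP [a1 a2] /minvP [b1 b2]; exists (minv B * minv A); split.
  by rewrite mulrA -(mulrA A) b1 mulr1 a1.
by rewrite mulrA -(mulrA (minv B)) a2 mulr1 b2.
Qed.
Lemma minvM (A B : M) : invertible A -> invertible B ->
  minv (A * B) = minv B * minv A.
Proof.
move=> /minvP [a1 a2] /minvP [b1 b2]; apply: minv_uniq.
  by rewrite mulrA -(mulrA A) b1 mulr1 a1.
by rewrite mulrA -(mulrA (minv B)) a2 mulr1 b2.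
Qed.

Lemma sigmaE (g : M) : sigma g = J * adjm (minv g) * J.
Proof. by []. Qed.

Lemma minv_sigma (g : M) : invertible g -> minv (sigma g) = J * adjm g * J.
Proof.
move=> /minvP [g1 g2]; apply: minv_uniq; rewrite sigmaE.
  by rewrite -!mulrA (mulrA J J) JJ mul1r (mulrA (adjm _)) -adjmM g1 adjm1 mul1r JJ.
by rewrite -!mulrA (mulrA J J) JJ mul1r (mulrA (adjm _)) -adjmM g2 adjm1 mul1r JJ.
Qed.
Lemma sigma_inv (g : M) : invertible g -> invertible (sigma g).
Proof.
move=> ig; exists (J * adjm g * J).
have [g1 g2] := minvP ig; rewrite sigmaE; split.
  by rewrite -!mulrA (mulrA J J) JJ mul1r (mulrA (adjm _)) -adjmM g1 adjm1 mul1r JJ.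
by rewrite -!mulrA (mulrA J J) JJ mul1r (mulrA (adjm _)) -adjmM g2 adjm1 mul1r JJ.
Qed.
Lemma sigmaM (A B : M) : invertible A -> invertible B ->
  sigma (A * B) = sigma A * sigma B.
Proof.
move=> iA iB; rewrite !sigmaE minvM // adjmM.
by rewrite -!mulrA (mulrA J J) JJ mul1r.
Qed.
Lemma sigmaK (g : M) : invertible g -> sigma (sigma g) = g.
Proof.
move=> ig; rewrite [sigma (sigma g)]sigmaE minv_sigma // !adjmM adjmJ adjmK.
by rewrite !mulrA JJ mul1r -!mulrA JJ mulr1.
Qed.

Lemma snorm20 : snorm2 (0 : S) = 0.
Proof. by rewrite snorm2E sconj0 mulr0 sre0. Qed.

Lemma hs2E (X : M) : hs2 X = \sum_i sre ((X * adjm X) i i).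
Proof.
apply: eq_bigr => i _; rewrite mulE sre_sum; apply: eq_bigr => j _.
by rewrite adjmE snorm2E.
Qed.
Lemma hs2E' (X : M) : hs2 X = \sum_i sre ((adjm X * X) i i).
Proof.
rewrite /hs2 exchange_big /=; apply: eq_bigr => i _; rewrite mulE sre_sum.
by apply: eq_bigr => j _; rewrite adjmE snorm2E'.
Qed.

Definition unitary (U : M) := adjm U * U = 1 /\ U * adjm U = 1.

Lemma hs2_unit (U X V : M) : unitary U -> unitary V -> hs2 (U * X * V) = hs2 X.
Proof.
move=> [u1 u2] [v1 v2].
have -> : hs2 (U * X * V) = hs2 (U * X).
  by rewrite !hs2E adjmM -mulrA (mulrA V) v2 mul1r.
by rewrite !hs2E' adjmM -mulrA (mulrA (adjm U)) u1 mul1r.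
Qed.
Lemma unitaryM (U V : M) : unitary U -> unitary V -> unitary (U * V).
Proof.
move=> [u1 u2] [v1 v2]; split; rewrite adjmM.
  by rewrite -mulrA (mulrA (adjm U)) u1 mul1r.
by rewrite -mulrA (mulrA V) v2 mul1r.
Qed.
Lemma unitaryJ : unitary J.
Proof. by rewrite /unitary adjmJ JJ. Qed.
Lemma unitary_adj U : unitary U -> unitary (adjm U).
Proof. by move=> [u1 u2]; rewrite /unitary adjmK. Qed.

Lemma K_unitary (k : M) : Kgrp k -> unitary k /\ minv k = adjm k.
Proof.
move=> [[ik _] tk]; have [k1 k2] := minvP ik.
have e : adjm k = minv k by rewrite -{1}tk /theta adjmK.
by rewrite /unitary e.
Qed.

Lemma PhiK (g k : M) : invertible g -> Kgrp k -> Phi (k * g) = Phi g.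
Proof.
move=> ig Kk; have [uk mk] := K_unitary Kk; have ik : invertible k by case: Kk => [[]].
have isk := sigma_inv ik; have isg := sigma_inv ig.
rewrite /Phi (sigmaM ik ig) (minvM isk isg) (minvM ik ig) (minv_sigma ik) mk.
have uJ := unitaryJ.
congr (_ * _).
  rewrite mulrA -(mulrA k).
  apply: hs2_unit => //.
  by apply: unitaryM => //; apply: unitaryM => //; apply: unitary_adj.
rewrite mulrA -(mulrA (sigma k)).
apply: hs2_unit; last by apply: unitary_adj.
by rewrite sigmaE mk adjmK; apply: unitaryM => //; apply: unitaryM.
Qed.

Lemma PhiH (g h : M) : invertible g -> invertible h -> sigma h = h ->
  Phi (g * h) = Phi g.
Proof.
move=> ig ih sh; have [h1 h2] := minvP ih.
have isg := sigma_inv ig.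
rewrite /Phi (sigmaM ig ih) sh (minvM isg ih) (minvM ig ih).
by rewrite -(mulrA g) (mulrA h) h1 mul1r -(mulrA (sigma g)) (mulrA h) h1 mul1r.
Qed.

Lemma Phi_sigma (g : M) : invertible g -> Phi (sigma g) = Phi g.
Proof. by move=> ig; rewrite /Phi sigmaK // mulrC. Qed.


Local Notation at_ := (@a_t R F).
Lemma atE (t : 'I_3 -> R) : at_ t = dmx (fun i => sreal F (expR (t i))).
Proof. by []. Qed.

Lemma at_inv (t : 'I_3 -> R) :
  at_ t * at_ (fun i => - t i) = 1 /\ at_ (fun i => - t i) * at_ t = 1.
Proof.
rewrite !atE !dmxM -dmx1; split; apply: eq_dmx => i;
  by rewrite -srealM -expRD ?subrr ?addNr expR0 sreal1.
Qed.
Lemma at_invertible t : invertible (at_ t).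
Proof. by exists (at_ (fun i => - t i)); apply: at_inv. Qed.
Lemma minv_at t : minv (at_ t) = at_ (fun i => - t i).
Proof. by have [h1 h2] := at_inv t; apply: minv_uniq. Qed.
Lemma sigma_at t : sigma (at_ t) = at_ (fun i => - t i).
Proof.
rewrite sigmaE minv_at !atE adjm_dmx JE !dmxM; apply: eq_dmx => i.
rewrite sconj_real; case: (i == 0); first by rewrite mul1r mulr1.
by rewrite mulN1r mulrN1 opprK.
Qed.
Lemma hs2_dmx d : hs2 (dmx d) = \sum_i snorm2 (d i).
Proof.
apply: eq_bigr => i _; rewrite (bigD1 i) //= big1 ?addr0; first by rewrite mxE eqxx.
by move=> j /negPf nij; rewrite mxE eq_sym nij snorm20.
Qed.
Lemma Phi_at t :
  Phi (at_ t) = (\sum_i expR (4 * t i)) * (\sum_i expR (- (4 * t i))).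
Proof.
rewrite /Phi sigma_at !minv_at !atE !dmxM !hs2_dmx.
congr (_ * _); apply: eq_bigr => i _; rewrite -srealM snorm2_real ?opprK -!expRD expr2 -expRD;
  congr expR; ring.
Qed.

End Base.

Lemma sum3 (R : realType) (f : 'I_3 -> R) : \sum_i f i = f i1 + f i2 + f i3.
Proof.
rewrite !big_ord_recl big_ord0 addr0 addrA /i1 /i2 /i3.
by congr (_ + f _ + f _); apply: val_inj; rewrite /= inordK.
Qed.

Lemma cosh_id (R : realType) (t : 'I_3 -> R) :
     (\sum_i expR (4 * t i)) * (\sum_i expR (- (4 * t i)))
       = 3 + 2 * coshR (4 * (t i1 - t i2)) + 2 * coshR (4 * (t i1 - t i3))
           + 2 * coshR (4 * (t i2 - t i3)).
Proof.
have e (a b : R) : expR (4 * (a - b)) = expR (4 * a) / expR (4 * b).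
  by rewrite -expRN -expRD; congr expR; ring.
have e' (a b : R) : expR (- (4 * (a - b))) = expR (4 * b) / expR (4 * a).
  by rewrite -expRN -expRD; congr expR; ring.
rewrite !sum3 /coshR !e !e' !expRN.
have h1 := expR_gt0 (4 * t i1); have h2 := expR_gt0 (4 * t i2);
have h3 := expR_gt0 (4 * t i3).
by field; rewrite ?gt_eqF.
Qed.

Theorem lemma1p9 (R : realType) (F : fld) :
  (forall (g : 'M[scal R F]_3) (t : 'I_3 -> R),
     \sum_i t i = 0 -> SL3 g ->
     (exists k h, Kgrp k /\ Hgrp h /\ g = k * @a_t R F t * h) ->
     Phi g = (\sum_i expR (4 * t i)) * (\sum_i expR (- (4 * t i))) /\
     (\sum_i expR (4 * t i)) * (\sum_i expR (- (4 * t i)))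
       = 3 + 2 * coshR (4 * (t i1 - t i2)) + 2 * coshR (4 * (t i1 - t i3))
           + 2 * coshR (4 * (t i2 - t i3))) /\
  (forall g k : 'M[scal R F]_3, SL3 g -> Kgrp k -> Phi (k * g) = Phi g) /\
  (forall g h : 'M[scal R F]_3, SL3 g -> Hgrp h -> Phi (g * h) = Phi g) /\
  (forall g : 'M[scal R F]_3, SL3 g -> Phi (sigma g) = Phi g) /\
  (forall (t : 'I_3 -> R) (s : 'S_3), \sum_i t i = 0 ->
     Phi (@a_t R F (fun i => t (s i))) = Phi (@a_t R F t)).
Proof.
have Hinv (h : 'M[scal R F]_3) : Hgrp h -> invertible h /\ sigma h = h.
  move=> [gam [_ [Hs [_ g1]]]].
  have := Hs 1; rewrite g1 ler01 lexx => /(_ isT) [[ih _] sh]; by [].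
split.
  move=> g t _ _ [k [h [Kk [Hh ->]]]].
  have [ih sh] := Hinv h Hh.
  have ik : invertible k by case: Kk => [[]].
  rewrite (PhiH (invM ik (@at_invertible R F t)) ih sh) (PhiK (@at_invertible R F t) Kk) Phi_at.
  by split => //; apply: cosh_id.
split; first by move=> g k [ig _] Kk; apply: PhiK.
split; first by move=> g h [ig _] /Hinv [ih sh]; apply: PhiH.
split; first by move=> g [ig _]; apply: Phi_sigma.
move=> t s _; rewrite !Phi_at; congr (_ * _); symmetry.
  exact: (reindex_inj (F := fun i => expR (4 * t i)) (@perm_inj _ s)).
exact: (reindex_inj (F := fun i => expR (- (4 * t i))) (@perm_inj _ s)).
Qed.
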